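(* Let $Q$ be a quantale with m-filters $(\mathcal{F}_k)_{k=1}^\infty$ such that $\mathcal{F}=\bigcap_{k=1}^\infty\mathcal{F}_k$ is locally solid, and let $M$ be a shrinkable $Q$-module such that every $\mathcal{F}_k$ is 1-step over $M$. Then the map $M_\mathcal{F}\to\prod_{k=1}^\infty M_{\mathcal{F}_k}$, $\overline x\mapsto(\overline x)_k$, is injective. (More precisely: for $a,b\in M$, if $a\preceq^1_{\mathcal{F}_k}b$ for all $k$, then $a\preceq^1_\mathcal{F}b$.)
   Context: A quantale is a poset $Q$ with all nonempty joins $\sum$ (no bottom required), top $1$, commutative associative multiplication with unit $1$ distributing over nonempty joins. A $Q$-module is a poset $M$ with all nonempty joins and an associative unital action distributing over nonempty joins in each variable. An m-filter is a subset of $Q$ containing $1$, upward closed and closed under multiplication. $\mathcal{F}$ is locally solid if there is a nonempty $W\subseteq Q$ with $\sum W=1$ such that for every $w\in W$ and every nonempty family $(x_i)_{i\in I}$ with $\sum_ix_i\in\mathcal{F}$ there exist $t\in\mathcal{F}$ and finite nonempty $I_0\subseteq I$ with $tw\le\sum_{i\in I_0}x_i$. For $x,x_i$ write $x\le^*\sum_ix_i$ if $x\le\sum_{i\in I_0}x_i$ for some finite nonempty $I_0$; $M$ is shrinkable if whenever $x\le\sum_ix_i$ there is a family $(y_j)$ with $x=\sum_jy_j$ and each $y_j\le^*\sum_ix_i$. For $a,b\in M$: $a\preceq^1_\mathcal{F}b$ means there are families $(a_i)$ in $M$, $(s_i)$ in $\mathcal{F}$ with $a\le\sum a_i$ and $s_ia_i\le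 b$; $a\preceq^n_\mathcal{F}b$ means a chain of $n$ such steps; $a\preceq_\mathcal{F}b$ means $a\preceq^n_\mathcal{F}b$ for some $n\ge1$. $M_\mathcal{F}$ is $M$ modulo $a\sim b\iff a\preceq_\mathcal{F}b\preceq_\mathcal{F}a$, with classes $\overline a$. $\mathcal{F}$ is localizable over $M$ if for each $b$ there is $n_b$ with $a\preceq_\mathcal{F}b\Rightarrow a\preceq^{n_b}_\mathcal{F}b$; 1-step over $M$ if localizable and $a\preceq_\mathcal{F}b\Rightarrow a\preceq^1_\mathcal{F}b$. *)

(* Defs.v *)
From Stdlib Require Import List.
Import ListNotations.

Record Quantale := {
  qcar :> Type;
  qle : qcar -> qcar -> Prop;
  qsup : forall I : Type, (I -> qcar) -> qcar;
  qone : qcar;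
  qmul : qcar -> qcar -> qcar;
  qle_refl : forall x, qle x x;
  qle_trans : forall x y z, qle x y -> qle y z -> qle x z;
  qle_antisym : forall x y, qle x y -> qle y x -> x = y;
  qsup_ub : forall (I : Type) (f : I -> qcar), inhabited I -> forall i, qle (f i) (qsup I f);
  qsup_least : forall (I : Type) (f : I -> qcar) (u : qcar), inhabited I ->
      (forall i, qle (f i) u) -> qle (qsup I f) u;
  qone_top : forall x, qle x qone;
  qmul_comm : forall x y, qmul x y = qmul y x;
  qmul_assoc : forall x y z, qmul x (qmul y z) = qmul (qmul x y) z;
  qmul_one : forall x, qmul qone x = x;
  qmul_sup : forall x (I : Type) (f : I -> qcar), inhabited I ->
      qmul x (qsup I f) = qsup I (fun i => qmul x (f i))
}.

Record QModule (Q : Quantale) := {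
  mcar :> Type;
  mle : mcar -> mcar -> Prop;
  msup : forall I : Type, (I -> mcar) -> mcar;
  mact : Q -> mcar -> mcar;
  mle_refl : forall x, mle x x;
  mle_trans : forall x y z, mle x y -> mle y z -> mle x z;
  mle_antisym : forall x y, mle x y -> mle y x -> x = y;
  msup_ub : forall (I : Type) (f : I -> mcar), inhabited I -> forall i, mle (f i) (msup I f);
  msup_least : forall (I : Type) (f : I -> mcar) (u : mcar), inhabited I ->
      (forall i, mle (f i) u) -> mle (msup I f) u;
  mact_assoc : forall (q r : Q) x, mact (qmul Q q r) x = mact q (mact r x);
  mact_one : forall x, mact (qone Q) x = x;
  mact_supl : forall (I : Type) (f : I -> Q) x, inhabited I ->
      mact (qsup Q I f) x = msup I (fun i => mact (f i) x);
  mact_supr : forall (q : Q) (I : Type) (f : I -> mcar), inhabited I ->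
      mact q (msup I f) = msup I (fun i => mact q (f i))
}.

Arguments mle {Q} _ _ _.
Arguments msup {Q} _ _ _.
Arguments mact {Q} _ _ _.

Section Defs.
Variable Q : Quantale.

Definition mfilter (F : Q -> Prop) : Prop :=
  F (qone Q) /\
  (forall x y, F x -> qle Q x y -> F y) /\
  (forall x y, F x -> F y -> F (qmul Q x y)).

Definition qfinsup {I : Type} (x : I -> Q) (l : list I) : Q :=
  qsup Q {i : I | In i l} (fun i => x (proj1_sig i)).

Definition locally_solid (F : Q -> Prop) : Prop :=
  exists W : Q -> Prop,
    (exists w, W w) /\
    qsup Q {w : Q | W w} (@proj1_sig _ _) = qone Q /\
    forall w, W w ->
      forall (I : Type) (x : I -> Q), inhabited I -> F (qsup Q I x) ->
        exists t, F t /\ exists l : list I, l <> [] /\ qle Q (qmul Q t w) (qfinsup x l).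

Variable M : QModule Q.

Definition mfinsup {I : Type} (x : I -> M) (l : list I) : M :=
  msup M {i : I | In i l} (fun i => x (proj1_sig i)).

Definition le_star {I : Type} (x : M) (xs : I -> M) : Prop :=
  exists l : list I, l <> [] /\ mle M x (mfinsup xs l).

Definition shrinkable : Prop :=
  forall (x : M) (I : Type) (xs : I -> M), inhabited I -> mle M x (msup M I xs) ->
    exists (J : Type) (ys : J -> M),
      inhabited J /\ x = msup M J ys /\ forall j, le_star (ys j) xs.

Definition prec1 (F : Q -> Prop) (a b : M) : Prop :=
  exists (I : Type) (as_ : I -> M) (s : I -> Q),
    inhabited I /\ mle M a (msup M I as_) /\
    forall i, F (s i) /\ mle M (mact M (s i) (as_ i)) b.

Fixpoint precn (F : Q -> Prop) (n : nat) (a b : M) : Prop :=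
  match n with
  | O => a = b
  | S n' => exists c, precn F n' a c /\ prec1 F c b
  end.

Definition prec (F : Q -> Prop) (a b : M) : Prop :=
  exists n, 1 <= n /\ precn F n a b.

(** a ~ b in M_F *)
Definition equivF (F : Q -> Prop) (a b : M) : Prop := prec F a b /\ prec F b a.

Definition localizable (F : Q -> Prop) : Prop :=
  forall b : M, exists nb : nat, forall a : M, prec F a b -> precn F nb a b.

Definition one_step (F : Q -> Prop) : Prop :=
  localizable F /\ forall a b : M, prec F a b -> prec1 F a b.

End Defs.

(* Main.v *)
Require Import Defs.
From Stdlib Require Import List Lia Classical ClassicalEpsilon PeanoNat Arith.
Import ListNotations.

Section Aux.
Variable Q : Quantale.
Variable M : QModule Q.

Lemma qjoin2 (x y : Q) : qle Q x y ->
  qsup Q bool (fun b => if b then x else y) = y.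
Proof.
  intros H. apply qle_antisym.
  - apply qsup_least. constructor; exact true. intros [|]; [exact H| apply qle_refl].
  - apply (qsup_ub Q bool (fun b => if b then x else y) (inhabits true) false).
Qed.

Lemma mjoin2 (x y : M) : mle M x y ->
  msup M bool (fun b => if b then x else y) = y.
Proof.
  intros H. apply mle_antisym.
  - apply msup_least. constructor; exact true. intros [|]; [exact H| apply mle_refl].
  - apply (msup_ub Q M bool (fun b => if b then x else y) (inhabits true) false).
Qed.

Lemma qmul_mono (z x y : Q) : qle Q x y -> qle Q (qmul Q z x) (qmul Q z y).
Proof.
  intros H. rewrite <- (qjoin2 x y H). rewrite qmul_sup by (constructor; exact true).
  apply (qsup_ub Q bool (fun b => qmul Q z (if b then x else y)) (inhabits true) true).
Qed.

Lemma qmul_le_r (x y : Q) : qle Q (qmul Q x y) y.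
Proof.
  rewrite qmul_comm. eapply qle_trans. apply (qmul_mono y x (qone Q)), qone_top.
  rewrite qmul_comm, qmul_one. apply qle_refl.
Qed.

Lemma qmul_le_l (x y : Q) : qle Q (qmul Q x y) x.
Proof. rewrite qmul_comm. apply qmul_le_r. Qed.

Lemma mact_mono_l (q r : Q) (v : M) : qle Q q r -> mle M (mact M q v) (mact M r v).
Proof.
  intros H. rewrite <- (qjoin2 q r H). rewrite mact_supl by (constructor; exact true).
  apply (msup_ub Q M bool (fun b => mact M (if b then q else r) v) (inhabits true) true).
Qed.

Lemma mact_mono_r (q : Q) (v v' : M) : mle M v v' -> mle M (mact M q v) (mact M q v').
Proof.
  intros H. rewrite <- (mjoin2 v v' H). rewrite mact_supr by (constructor; exact true).
  apply (msup_ub Q M bool (fun b => mact M q (if b then v else v')) (inhabits true) true).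
Qed.

Fixpoint qprod {I : Type} (s : I -> Q) (l : list I) : Q :=
  match l with [] => qone Q | i :: l' => qmul Q (s i) (qprod s l') end.

Lemma qprod_le {I : Type} (s : I -> Q) (l : list I) i : In i l -> qle Q (qprod s l) (s i).
Proof.
  induction l as [|j l IH]; simpl; [tauto|].
  intros [<-|Hi]. apply qmul_le_l.
  eapply qle_trans. apply qmul_le_r. auto.
Qed.

Lemma qprod_in {I : Type} (F : Q -> Prop) (s : I -> Q) (l : list I) :
  mfilter Q F -> (forall i, F (s i)) -> F (qprod s l).
Proof.
  intros [H1 [_ H3]] Hs. induction l; simpl; auto.
Qed.

End Aux.

Lemma dc_seq {A : Type} (P : A -> Prop) (R : nat -> A -> A -> Prop) (x0 : A) :
  P x0 -> (forall n x, P x -> exists y, P y /\ R n x y) ->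
  exists f : nat -> A, f 0 = x0 /\ forall n, P (f n) /\ R n (f n) (f (S n)).
Proof.
  intros H0 Hs.
  set (nx := fun n (x : {x | P x}) =>
        constructive_indefinite_description _ (Hs n (proj1_sig x) (proj2_sig x))).
  set (g := fix g (n : nat) : {x | P x} :=
        match n with 0 => exist _ x0 H0
        | S m => let y := nx m (g m) in exist _ (proj1_sig y) (proj1 (proj2_sig y)) end).
  exists (fun n => proj1_sig (g n)). split; [reflexivity|].
  intros n. split. apply (proj2_sig (g n)).
  simpl. exact (proj2 (proj2_sig (nx n (g n)))).
Qed.

Lemma in_le_max (l : list nat) i : In i l -> i <= fold_right max 0 l.
Proof. induction l; simpl; [tauto|]. intros [<-|H]; [lia|]. specialize (IHl H); lia. Qed.


Definition Tset (Q : Quantale) (M : QModule Q) (F : Q -> Prop) (b : M) :=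
  {y : M | exists t, F t /\ mle M (mact M t y) b}.
Definition Gsup (Q : Quantale) (M : QModule Q) (F : Q -> Prop) (b : M) : M :=
  msup M (Tset Q M F b) (@proj1_sig _ _).

Lemma key (Q : Quantale) (Fk : nat -> Q -> Prop) (M : QModule Q) (a b : M) (w : Q) :
  (forall k, mfilter Q (Fk k)) -> shrinkable Q M ->
  (forall k, prec1 Q M (Fk k) a b) ->
  (forall (I : Type) (x : I -> Q), inhabited I -> (forall k, Fk k (qsup Q I x)) ->
        exists t, (forall k, Fk k t) /\ exists l : list I, l <> [] /\
          qle Q (qmul Q t w) (qfinsup Q x l)) ->
  mle M (mact M w a) (Gsup Q M (fun q => forall k, Fk k q) b).
Proof.
  intros Hf Hsh Hab HLS.
  set (F := fun q => forall k, Fk k q).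
  set (good := fun v => mle M (mact M w v) (Gsup Q M F b)).
  assert (Hgood : forall v t, F t -> mle M (mact M t (mact M w v)) b -> good v).
  { intros v t Ht Hle. unfold good, Gsup.
    set (y := exist (fun y => exists t, F t /\ mle M (mact M t y) b) (mact M w v)
                (ex_intro _ t (conj Ht Hle)) : Tset Q M F b).
    refine (msup_ub Q M _ (@proj1_sig _ _) (inhabits y) y). }
  apply NNPP. intros Hna.
  set (P := fun p : M * Q => mle M (fst p) a /\ ~ good (fst p)).
  set (R := fun n (p p' : M * Q) => mle M (fst p') (fst p) /\ Fk n (snd p') /\
                    mle M (mact M (snd p') (fst p')) b).
  destruct (dc_seq P R (a, qone Q)) as [f [Hf0 Hfs]].
  - split; [apply mle_refl | exact Hna].
  - intros n [v q] [Hva Hgv]. simpl in *.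
    destruct (Hab n) as [I [as_ [s [HI [Has Hs]]]]].
    destruct (Hsh v I as_ HI (mle_trans _ _ _ _ _ Hva Has)) as [J [ys [HJ [Hv Hys]]]].
    apply NNPP; intros Hno. apply Hgv. unfold good.
    rewrite Hv, mact_supr by exact HJ. apply msup_least; [exact HJ|]. intros j.
    assert (Hyv : mle M (ys j) v).
    { rewrite Hv. apply (msup_ub Q M J ys HJ j). }
    destruct (Hys j) as [l [Hl Hle]].
    set (rho := qprod Q s l).
    apply NNPP; intros Hng. apply Hno. exists (ys j, rho). split.
    + split; simpl. eapply mle_trans; [exact Hyv | exact Hva]. exact Hng.
    + assert (HIl : inhabited {i : I | In i l}).
      { destruct l as [|i0 l0]; [congruence|]. constructor. exists i0. left; reflexivity. }
      split; [exact Hyv|]. split; simpl.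
      * apply qprod_in; [apply Hf| intros i; apply Hs].
      * eapply mle_trans. apply mact_mono_r, Hle.
        unfold mfinsup. rewrite mact_supr by exact HIl.
        apply msup_least; [exact HIl|]. intros [i Hi]; simpl.
        eapply mle_trans; [apply mact_mono_l, (qprod_le Q s l i Hi)| apply Hs].
  - set (v := fun n => fst (f n)). set (rho := fun n => snd (f (S n))).
    assert (Hdec : forall n, mle M (v (S n)) (v n)) by (intros n; apply (Hfs n)).
    assert (HF : forall n, Fk n (rho n)) by (intros n; apply (Hfs n)).
    assert (Hb : forall n, mle M (mact M (rho n) (v (S n))) b) by (intros n; apply (Hfs n)).
    assert (Hch : forall k d, mle M (v (S k + d)) (v (S k))).
    { intros k d; induction d. rewrite Nat.add_0_r; apply mle_refl.
      eapply mle_trans; [|exact IHd]. rewrite Nat.add_succ_r. apply Hdec. }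
    destruct (HLS nat rho (inhabits 0)) as [t [Ht [l [Hl Hle]]]].
    { intros k. destruct (Hf k) as [_ [Hup _]]. apply (Hup (rho k)); [apply HF|].
      apply (qsup_ub Q nat rho (inhabits 0) k). }
    set (N := S (fold_right max 0 l)).
    destruct (Hfs N) as [[_ HgN] _]. apply HgN. fold (v N).
    apply (Hgood (v N) t Ht). rewrite <- mact_assoc.
    eapply mle_trans. apply mact_mono_l, Hle.
    assert (HIl : inhabited {i : nat | In i l}).
    { destruct l as [|i0 l0]; [congruence|]. constructor. exists i0. left; reflexivity. }
    unfold qfinsup. rewrite mact_supl by exact HIl.
    apply msup_least; [exact HIl|]. intros [i Hi]; simpl.
    eapply mle_trans; [|apply (Hb i)]. apply mact_mono_r.
    pose proof (in_le_max l i Hi).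
    replace N with (S i + (fold_right max 0 l - i)) by (unfold N; lia). apply Hch.
Qed.

Lemma part2 (Q : Quantale) (Fk : nat -> Q -> Prop) (M : QModule Q) :
  (forall k, mfilter Q (Fk k)) ->
  locally_solid Q (fun q => forall k, Fk k q) ->
  shrinkable Q M ->
  forall a b : M, (forall k, prec1 Q M (Fk k) a b) ->
                   prec1 Q M (fun q => forall k, Fk k q) a b.
Proof.
  intros Hf [W [[w0 Hw0] [HW HLS]]] Hsh a b Hab.
  set (F := fun q => forall k, Fk k q).
  set (sel := fun y : Tset Q M F b =>
     proj1_sig (constructive_indefinite_description _ (proj2_sig y))).
  exists (Tset Q M F b), (@proj1_sig _ _), sel. split; [|split].
  - constructor. exists b. exists (qone Q). split.
    + intros k; apply (Hf k).
    + rewrite mact_one; apply mle_refl.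
  - rewrite <- (mact_one Q M a), <- HW.
    assert (HIW : inhabited {w : Q | W w}) by (constructor; exists w0; exact Hw0).
    rewrite mact_supl by exact HIW. apply msup_least; [exact HIW|].
    intros [w Hw]; simpl. apply key; auto.
  - intros y. unfold sel. destruct (constructive_indefinite_description _ (proj2_sig y)) as [t Ht].
    exact Ht.
Qed.

Theorem mainTheorem11 (Q : Quantale) (Fk : nat -> Q -> Prop) (M : QModule Q) :
  (forall k, mfilter Q (Fk k)) ->
  locally_solid Q (fun q => forall k, Fk k q) ->
  shrinkable Q M ->
  (forall k, one_step Q M (Fk k)) ->
  (forall a b : M, (forall k, equivF Q M (Fk k) a b) ->
                   equivF Q M (fun q => forall k, Fk k q) a b) /\
  (forall a b : M, (forall k, prec1 Q M (Fk k) a b) ->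
                   prec1 Q M (fun q => forall k, Fk k q) a b).
Proof.
  intros Hf HLS Hsh H1.
  assert (P2 := part2 Q Fk M Hf HLS Hsh).
  split; [|exact P2].
  intros a b Heq.
  assert (Hp : forall x y : M, (forall k, prec Q M (Fk k) x y) ->
             prec Q M (fun q => forall k, Fk k q) x y).
  { intros x y Hk. exists 1. split; [apply le_n|]. simpl. exists x. split; [reflexivity|].
    apply P2. intros k. apply (proj2 (H1 k)). apply Hk. }
  split; apply Hp; intros k; apply (Heq k).
Qed.
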